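(* Let $A\in\mathbb{C}^{m\times n}$. Then the following are equivalent: (1) $A^{\mathfrak{m}}$ exists; (2) $\mathrm{Ind}(A^{\sim}A)=1$ and $\mathcal{N}(A^{\sim}A)\subseteq\mathcal{N}(A)$; (3) $\mathrm{Ind}(AA^{\sim})=1$ and $\mathcal{R}(A)\subseteq\mathcal{R}(AA^{\sim})$.
   Context: For a positive integer $k$, the Minkowski metric matrix of order $k$ is $G_k=\mathrm{diag}(1,-I_{k-1})$ (with $G_1=(1)$). For $A\in\mathbb{C}^{m\times n}$, the Minkowski adjoint is $A^{\sim}=G_nA^*G_m$, where $A^*$ is the conjugate transpose. The Minkowski inverse of $A$, denoted $A^{\mathfrak{m}}$, is a matrix $X\in\mathbb{C}^{n\times m}$ with $AXA=A$, $XAX=X$, $(AX)^{\sim}=AX$, $(XA)^{\sim}=XA$ (unique if it exists). For a square matrix $M$, $\mathrm{Ind}(M)$ is the smallest nonnegative integer $t$ with $\mathrm{rank}(M^{t+1})=\mathrm{rank}(M^t)$, where $M^0=I$. $\mathcal{R}(\cdot)$, $\mathcal{N}(\cdot)$ denote range and null space. *)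

(* Defs.v *)
(* Complex numbers: C := R[i] = complex R for R : realType
   (every realType is a complete archimedean ordered field, i.e. a copy of the reals). *)
From HB Require Import structures.
From mathcomp Require Import all_boot all_order all_algebra.
From mathcomp Require Import complex.
From mathcomp Require Import reals.
Set Implicit Arguments. Unset Strict Implicit. Unset Printing Implicit Defensive.
Import Order.TTheory GRing.Theory Num.Theory.
Local Open Scope ring_scope.

Section Minkowski.
Variable C : numClosedFieldType.

Definition mink_G (k : nat) : 'M[C]_k :=
  \matrix_(i < k, j < k) (if i == j then (if val i == 0%N then 1 else -1) else 0).

Definition ctrmx m n (A : 'M[C]_(m, n)) : 'M[C]_(n, m) := (map_mx Num.conj A)^T.

Definition madj m n (A : 'M[C]_(m, n)) : 'M[C]_(n, m) :=
  mink_G n *m ctrmx A *m mink_G m.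

Definition is_minkowski_inverse m n (A : 'M[C]_(m, n)) (X : 'M[C]_(n, m)) : Prop :=
  [/\ A *m X *m A = A, X *m A *m X = X,
      madj (A *m X) = A *m X & madj (X *m A) = X *m A].

(* Ind(M): smallest t >= 0 with rank(M^(t+1)) = rank(M^t).  Such a t <= n always
   exists, so searching in 0..n gives exactly that minimum. *)
Definition mxindex n (M : 'M[C]_n) : nat :=
  find (fun t => \rank (M ^+ t.+1) == \rank (M ^+ t)) (iota 0 n.+1).

Definition null_sub p m n (M : 'M[C]_(p, n)) (A : 'M[C]_(m, n)) : Prop :=
  forall x : 'cV[C]_n, M *m x = 0 -> A *m x = 0.

Definition range_sub m p q (A : 'M[C]_(m, p)) (M : 'M[C]_(m, q)) : Prop :=
  forall x : 'cV[C]_p, exists y : 'cV[C]_q, A *m x = M *m y.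

End Minkowski.

(* Main.v *)
Require Import Defs.
From HB Require Import structures.
From mathcomp Require Import all_boot all_order all_algebra.
From mathcomp Require Import complex.
From mathcomp Require Import reals.
Set Implicit Arguments. Unset Strict Implicit. Unset Printing Implicit Defensive.
Import Order.TTheory GRing.Theory Num.Theory.
Local Open Scope ring_scope.

Section L.
Variable C : numClosedFieldType.

Lemma GG k : mink_G C k *m mink_G C k = 1%:M.
Proof.
apply/matrixP => i j; rewrite !mxE (bigD1 i) //= big1 ?addr0.
  rewrite !mxE eqxx; have [e|ne] := eqVneq i j; last by rewrite mulr0.
  subst j.
  by case: ifP; rewrite ?mulr1 ?mulrNN ?mulr1.
by move=> l nl; rewrite !mxE eq_sym (negbTE nl) mul0r.
Qed.

Lemma ctrG k : ctrmx (mink_G C k) = mink_G C k.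
Proof.
apply/matrixP => i j; rewrite !mxE eq_sym; case: eqVneq => [->|_].
  by case: ifP; rewrite ?rmorphN rmorph1.
by rewrite rmorph0.
Qed.

Lemma ctrM m n p (A : 'M[C]_(m,n)) (B : 'M[C]_(n,p)) :
  ctrmx (A *m B) = ctrmx B *m ctrmx A.
Proof. by rewrite /ctrmx map_mxM trmx_mul. Qed.

Lemma ctrK m n (A : 'M[C]_(m,n)) : ctrmx (ctrmx A) = A.
Proof. by apply/matrixP => i j; rewrite !mxE conjCK. Qed.

Lemma madjM m n p (A : 'M[C]_(m,n)) (B : 'M[C]_(n,p)) :
  madj (A *m B) = madj B *m madj A.
Proof.
by rewrite /madj ctrM !mulmxA -[_ *m mink_G C n *m mink_G C n]mulmxA GG mulmx1.
Qed.

Lemma madjK m n (A : 'M[C]_(m,n)) : madj (madj A) = A.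
Proof.
by rewrite /madj !ctrM ctrK !ctrG !mulmxA GG mul1mx -mulmxA GG mulmx1.
Qed.


Lemma colmul m n p (A : 'M[C]_(m,n)) (B : 'M[C]_(n,p)) j :
  A *m col j B = col j (A *m B).
Proof.
by apply/matrixP => i k; rewrite !mxE; apply: eq_bigr => l _; rewrite !mxE.
Qed.

Lemma nullsub_mx p m n q (M : 'M[C]_(p,n)) (A : 'M[C]_(m,n)) (B : 'M[C]_(n,q)) :
  null_sub M A -> M *m B = 0 -> A *m B = 0.
Proof.
move=> H MB; apply/matrixP => i j.
have := H (col j B); rewrite !colmul MB.
have -> : col j (0 : 'M[C]_(p,q)) = 0 by apply/matrixP => a b; rewrite !mxE.
move=> /(_ erefl) /matrixP /(_ i 0); rewrite !mxE.
by [].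
Qed.

Lemma rangesub_mx m p q (A : 'M[C]_(m,p)) (M : 'M[C]_(m,q)) :
  range_sub A M -> exists W, A = M *m W.
Proof.
move=> H.
have [f hf] := fin_all_exists (fun j : 'I_p => H (col j 1%:M)).
exists (\matrix_(i, j) f j i 0); apply/matrixP => i j.
have := hf j; rewrite colmul mulmx1 => /matrixP /(_ i 0).
rewrite !mxE => ->; apply: eq_bigr => l _; rewrite ?mxE.
by [].
Qed.

Lemma rank_from_Y k (M Y : 'M[C]_k) : M = Y *m (M *m M) -> \rank (M *m M) = \rank M.
Proof.
move=> h; apply/eqP; rewrite eqn_leq mxrankM_maxl /=.
by rewrite {1}h mxrankM_maxr.
Qed.

Lemma group_inv k (M : 'M[C]_k) : madj M = M -> \rank (M *m M) = \rank M ->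
  exists G, [/\ M *m G *m M = M, G *m M *m G = G, M *m G = G *m M & madj G = G].
Proof.
move=> sa rk.
have sub : (M <= M *m M)%MS.
  by rewrite -(mxrank_leqif_sup (submxMl M M)).2 rk eqxx.
have [Y h1] := submxP sub.
have [Z hZ] : {Z | Z = madj Y} by exists (madj Y).
have h2 : M = M *m M *m Z.
  by rewrite hZ -{1}sa {1}h1 madjM madjM sa.
have MYM : M *m Y *m M = M.
  rewrite {2}h2 !mulmxA -(mulmxA (M *m Y)) -(mulmxA M Y) -h1.
  by rewrite -h2.
have MZM : M *m Z *m M = M.
  rewrite {1}h1 !mulmxA -(mulmxA (Y *m M) M Z) -(mulmxA Y M (M *m Z)) (mulmxA M M Z) -h2.
  by rewrite -mulmxA -h1.
have YM : Y *m M = M *m Z.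
  have e1 : Y *m M = Y *m M *m (M *m Z).
    by rewrite {1}h2 -!mulmxA.
  have e2 : M *m Z = Y *m M *m (M *m Z).
    by rewrite {1}h1 -!mulmxA.
  by rewrite e1 -e2.
exists (Y *m M *m Z); split.
- by rewrite !mulmxA MYM MZM.
- rewrite !mulmxA -(mulmxA (Y *m M) Z M) -(mulmxA Y M (Z *m M)) (mulmxA M Z M) MZM.
  by rewrite -(mulmxA (Y *m M) Y M) -(mulmxA Y M (Y *m M)) (mulmxA M Y M) MYM.
- rewrite !mulmxA MYM -YM.
  by rewrite -(mulmxA (Y *m M) Z M) -(mulmxA Y M (Z *m M)) (mulmxA M Z M) MZM.
- by rewrite !madjM hZ madjK sa mulmxA.
Qed.

Lemma mxindex_le1 k (M : 'M[C]_k) : (0 < k)%N ->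
  (mxindex M <= 1)%N <-> \rank (M *m M) = \rank M.
Proof.
case: k M => // k M _; rewrite /mxindex /=.
have r1 : \rank (1 : 'M[C]_k.+1) = k.+1 := mxrank1 _ _.
rewrite expr0 expr1 expr2 -mulmxE r1.
case: eqP => [h0|_].
  split=> // _; apply: mxrankMfree; by rewrite /row_free h0.
case: eqP => [h1|n1]; first by [].
by split.
Qed.

Definition mi m n (A : 'M[C]_(m,n)) X := is_minkowski_inverse A X.

Lemma mi_adj m n (A : 'M[C]_(m,n)) X : is_minkowski_inverse A X ->
  is_minkowski_inverse (madj A) (madj X).
Proof.
case=> h1 h2 h3 h4; split.
- by rewrite -!madjM mulmxA h1.
- by rewrite -!madjM mulmxA h2.
- by rewrite -madjM h4.
- by rewrite -madjM h3.
Qed.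

Lemma i1_rank m n (A : 'M[C]_(m,n)) X : is_minkowski_inverse A X ->
  \rank ((madj A *m A) *m (madj A *m A)) = \rank (madj A *m A).
Proof.
case=> h1 h2 h3 h4.
have eA : A = madj X *m (madj A *m A).
  by rewrite {1}(esym h1) -h3 madjM mulmxA.
have eAd : madj A = X *m A *m madj A.
  by rewrite -{1}h1 !madjM -h4 madjM !mulmxA.
apply: (rank_from_Y (Y := X *m madj X)).
by rewrite {1}eAd {1}eA !mulmxA.
Qed.

Lemma i12 m n (A : 'M[C]_(m,n)) X : is_minkowski_inverse A X ->
  \rank ((madj A *m A) *m (madj A *m A)) = \rank (madj A *m A) /\
  null_sub (madj A *m A) A.
Proof.
move=> hX; split; first exact: i1_rank hX.
case: hX => h1 h2 h3 h4 x hx.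
by rewrite -h1 -h3 madjM -(mulmxA (madj X *m madj A) A x) -(mulmxA (madj X) (madj A) (A *m x)) (mulmxA (madj A) A x) hx mulmx0.
Qed.

Lemma i13 m n (A : 'M[C]_(m,n)) X : is_minkowski_inverse A X ->
  \rank ((A *m madj A) *m (A *m madj A)) = \rank (A *m madj A) /\
  range_sub A (A *m madj A).
Proof.
move=> hX; split.
  by have := i1_rank (mi_adj hX); rewrite madjK.
case: hX => h1 h2 h3 h4 x; exists (madj X *m x).
by rewrite -{1}h1 -(mulmxA A X A) -h4 madjM (mulmxA A (madj A) (madj X)) (mulmxA (A *m madj A) (madj X) x).
Qed.

Lemma i21 m n (A : 'M[C]_(m,n)) :
  \rank ((madj A *m A) *m (madj A *m A)) = \rank (madj A *m A) ->
  null_sub (madj A *m A) A -> exists X, is_minkowski_inverse A X.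
Proof.
set M := madj A *m A => rk ns.
have sa : madj M = M by rewrite /M madjM madjK.
have [G [g1 g2 g3 g4]] := group_inv sa rk.
exists (G *m madj A).
have AGM : A *m (G *m M) = A.
  apply/eqP; rewrite -subr_eq0; apply/eqP.
  have -> : A *m (G *m M) - A = A *m (G *m M - 1%:M) by rewrite mulmxBr mulmx1.
  apply: (nullsub_mx ns).
  by rewrite mulmxBr mulmx1 mulmxA g1 subrr.
split.
- by rewrite -(mulmxA A (G *m madj A) A) -(mulmxA G (madj A) A) -/M AGM.
- by rewrite (mulmxA (G *m madj A *m A) G (madj A)) -(mulmxA G (madj A) A) -/M g2.
- by rewrite madjM (madjM G (madj A)) madjK g4 mulmxA.
- by rewrite -(mulmxA G (madj A) A) -/M madjM sa g4 g3.
Qed.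

Lemma i31 m n (A : 'M[C]_(m,n)) :
  \rank ((A *m madj A) *m (A *m madj A)) = \rank (A *m madj A) ->
  range_sub A (A *m madj A) -> exists X, is_minkowski_inverse A X.
Proof.
set N := A *m madj A => rk rs.
have sa : madj N = N by rewrite /N madjM madjK.
have [G [g1 g2 g3 g4]] := group_inv sa rk.
have [W hW] := rangesub_mx rs.
exists (madj A *m G).
split.
- rewrite (mulmxA A (madj A) G) -/N {1}hW (mulmxA (N *m G) N W) g1.
  by rewrite -hW.
- rewrite (mulmxA (madj A *m G *m A) (madj A) G) -(mulmxA (madj A *m G) A (madj A)) -/N.
  by rewrite -(mulmxA (madj A *m G) N G) -(mulmxA (madj A) G (N *m G)) (mulmxA G N G) g2.
- by rewrite (mulmxA A (madj A) G) -/N madjM sa g4 g3.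
- by rewrite madjM (madjM (madj A) G) madjK g4 mulmxA.
Qed.

End L.

Theorem theorem5p3 (R : realType) (m n : nat) (Hm : (0 < m)%N) (Hn : (0 < n)%N)
    (A : 'M[R[i]]_(m, n)) :
  [<-> (exists X : 'M[R[i]]_(n, m), is_minkowski_inverse A X);
       (mxindex (madj A *m A) <= 1)%N /\ null_sub (madj A *m A) A;
       (mxindex (A *m madj A) <= 1)%N /\ range_sub A (A *m madj A)].
Proof.
tfae.
- case=> X hX; have [r s] := i12 hX; split=> //; exact/(mxindex_le1 _ Hn).
- case=> /(mxindex_le1 _ Hn) r s; have [X hX] := i21 r s.
  have [r' s'] := i13 hX; split=> //; exact/(mxindex_le1 _ Hm).
- case=> /(mxindex_le1 _ Hm) r s; exact: i31 r s.
Qed.
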